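(* Let $I=[a,b]$ be a compact interval, $r\ge1$ an integer, $g\in C^r(I,\mathbb R)$, and put $C_r:=\|g^{(r)}\|_{L^\infty(I)}$. Then for every $0<\lambda\le\|g\|_\infty$ there is a finite family of pairwise disjoint intervals $I_{\lambda,i}$, $i\in\mathcal I_\lambda$, such that: (i) $|\mathcal I_\lambda|\le 30r\big(1+|I|\,C_r^{1/r}\lambda^{-1/r}\big)$; (ii) with $V_\lambda:=\bigcup_{i\in\mathcal I_\lambda}I_{\lambda,i}$, we have $\{t\in I:|g(t)|<\lambda\}\subset V_\lambda\subset\{t\in I:|g(t)|<8\lambda\}$.
   Context: $\|g\|_\infty$ denotes the supremum of $|g|$ over $I$, and $|I|=b-a$ is the length of $I$. *)

(* Defs.v *)
From Stdlib Require Import Reals List.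
From Coquelicot Require Import Coquelicot.
Open Scope R_scope.

Definition Icc (a b : R) (t : R) : Prop := a <= t <= b.

Definition is_interval (J : R -> Prop) : Prop :=
  forall x y z, J x -> J z -> x <= y <= z -> J y.

(* f' is the derivative of f on [a,b], relative to [a,b]
   (one-sided at the endpoints). *)
Definition derive_on (a b : R) (f f' : R -> R) : Prop :=
  forall x, Icc a b x ->
    filterlim (fun y => (f y - f x) / (y - x))
      (within (fun y => Icc a b y /\ y <> x) (locally x))
      (locally (f' x)).

Definition continuous_on_Icc (a b : R) (f : R -> R) : Prop :=
  forall x, Icc a b x ->
    filterlim f (within (Icc a b) (locally x)) (locally (f x)).

(* D k = g^(k) for k <= r and g is C^r on [a,b]. *)
Definition Cr_derivs (a b : R) (r : nat) (g : R -> R) (D : nat -> R -> R) : Prop :=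
  (forall t, D O t = g t) /\
  (forall k, (k < r)%nat -> derive_on a b (D k) (D (S k))) /\
  continuous_on_Icc a b (D r).

Definition supnorm (a b : R) (f : R -> R) : R :=
  real (Lub_Rbar (fun y => exists t, Icc a b t /\ y = Rabs (f t))).

Definition rootn (r : nat) (x : R) : R :=
  if Rle_dec x 0 then 0 else Rpower x (/ INR r).

Definition pairwise_disjoint (L : list (R -> Prop)) : Prop :=
  forall i j, (i < length L)%nat -> (j < length L)%nat -> i <> j ->
    forall t, ~ (nth i L (fun _ => False) t /\ nth j L (fun _ => False) t).

Definition union_of (L : list (R -> Prop)) (t : R) : Prop :=
  exists J, In J L /\ J t.

(* Main.v *)
Require Import Defs.
From Stdlib Require Import Reals List Lra Lia Classical ZArith.
From Coquelicot Require Import Coquelicot.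
Open Scope R_scope.

Lemma ball_R (x e y : R) : ball x e y <-> Rabs (y - x) < e.
Proof. unfold ball; simpl; unfold AbsRing_ball, abs, minus, plus, opp; simpl. tauto. Qed.

Definition ceps (a b : R) (f : R -> R) : Prop :=
  forall x, Icc a b x -> forall e, 0 < e -> exists h, 0 < h /\
    forall y, Icc a b y -> Rabs (y - x) < h -> Rabs (f y - f x) < e.

Lemma cont_ceps a b f : continuous_on_Icc a b f -> ceps a b f.
Proof.
  intros H x Hx e He.
  specialize (H x Hx). rewrite filterlim_locally in H.
  destruct (H (mkposreal e He)) as [[h hp] Hh].
  exists h; split; auto. intros y Hy Hyx.
  apply ball_R. apply Hh; try apply ball_R; auto.
Qed.

Lemma deriv_eps a b f f' : derive_on a b f f' -> forall x, Icc a b x -> forall e, 0 < e ->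
  exists h, 0 < h /\ forall y, Icc a b y -> y <> x -> Rabs (y - x) < h ->
   Rabs ((f y - f x) / (y - x) - f' x) < e.
Proof.
  intros H x Hx e He.
  specialize (H x Hx). rewrite filterlim_locally in H.
  destruct (H (mkposreal e He)) as [[h hp] Hh].
  exists h; split; auto. intros y Hy Hne Hyx.
  apply ball_R. apply Hh; try apply ball_R; auto.
Qed.

Lemma deriv_ceps a b f f' : derive_on a b f f' -> ceps a b f.
Proof.
  intros H x Hx e He.
  destruct (deriv_eps a b f f' H x Hx 1 Rlt_0_1) as [h [hp Hh]].
  set (M := Rabs (f' x) + 1).
  assert (HM : 0 < M) by (unfold M; pose proof (Rabs_pos (f' x)); lra).
  exists (Rmin h (e / M)); split.
  { apply Rmin_pos; auto. apply Rdiv_lt_0_compat; auto. }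
  intros y Hy Hyx.
  destruct (Req_dec y x) as [->|Hne].
  { replace (f x - f x) with 0 by ring. rewrite Rabs_R0; auto. }
  specialize (Hh y Hy Hne (Rlt_le_trans _ _ _ Hyx (Rmin_l _ _))).
  assert (Hq : Rabs ((f y - f x) / (y - x)) <= M).
  { unfold M. replace ((f y - f x) / (y - x)) with (((f y - f x) / (y - x) - f' x) + f' x) by ring.
    eapply Rle_trans. apply Rabs_triang. lra. }
  replace (f y - f x) with ((f y - f x) / (y - x) * (y - x)) by (field; lra).
  rewrite Rabs_mult.
  assert (Hyx2 : Rabs (y - x) < e / M) by (eapply Rlt_le_trans; [exact Hyx| apply Rmin_r]).
  assert (0 < Rabs (y - x)) by (apply Rabs_pos_lt; lra).
  apply Rle_lt_trans with (M * Rabs (y - x)).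
  { apply Rmult_le_compat_r; lra. }
  apply Rmult_lt_reg_r with (/ M). apply Rinv_0_lt_compat; auto.
  replace (M * Rabs (y - x) * / M) with (Rabs (y - x)) by (field; lra). exact Hyx2.
Qed.

Definition clamp (a b x : R) := Rmax a (Rmin b x).

Lemma clamp_in a b x : a <= b -> Icc a b (clamp a b x).
Proof. intros. unfold clamp, Icc, Rmax, Rmin. repeat destruct Rle_dec; lra. Qed.
Lemma clamp_id a b x : Icc a b x -> clamp a b x = x.
Proof. intros [H1 H2]. unfold clamp, Rmax, Rmin. repeat destruct Rle_dec; lra. Qed.
Lemma clamp_lip a b x y : a <= b -> Rabs (clamp a b y - clamp a b x) <= Rabs (y - x).
Proof. intros. unfold clamp, Rmax, Rmin. repeat destruct Rle_dec; unfold Rabs; repeat destruct Rcase_abs; lra. Qed.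

Lemma ceps_contpt a b f : a <= b -> ceps a b f -> forall x, continuity_pt (fun t => f (clamp a b t)) x.
Proof.
  intros Hab H x. unfold continuity_pt, continue_in, limit1_in, limit_in. simpl. unfold R_dist.
  intros e He. destruct (H (clamp a b x) (clamp_in a b x Hab) e He) as [h [hp Hh]].
  exists h; split; auto. intros y [_ Hy].
  apply Hh. apply clamp_in; auto. eapply Rle_lt_trans. apply clamp_lip; auto. auto.
Qed.

Lemma deriv_clamp a b f f' x : derive_on a b f f' -> a < x < b ->
  is_derive (fun t => f (clamp a b t)) x (f' x).
Proof.
  intros H Hx. apply is_derive_Reals. intros e He.
  assert (Hxi : Icc a b x) by (unfold Icc; lra).
  destruct (deriv_eps a b f f' H x Hxi e He) as [h [hp Hh]].
  assert (Hd : 0 < Rmin h (Rmin (x - a) (b - x))) by (repeat apply Rmin_pos; lra).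
  exists (mkposreal _ Hd). intros k Hk Hkd. simpl in Hkd.
  assert (Hk1 : Rabs k < h) by (eapply Rlt_le_trans; [exact Hkd|apply Rmin_l]).
  assert (Hk2 : Rabs k < Rmin (x - a) (b - x)) by (eapply Rlt_le_trans; [exact Hkd|apply Rmin_r]).
  assert (Hk3 : Rabs k < x - a) by (eapply Rlt_le_trans; [exact Hk2|apply Rmin_l]).
  assert (Hk4 : Rabs k < b - x) by (eapply Rlt_le_trans; [exact Hk2|apply Rmin_r]).
  assert (Hin : Icc a b (x + k)) by (unfold Icc; unfold Rabs in *; destruct Rcase_abs; lra).
  rewrite (clamp_id a b (x+k) Hin), (clamp_id a b x Hxi).
  replace k with ((x + k) - x) at 2 by ring.
  apply Hh; auto. lra. replace (x + k - x) with k by ring. auto.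
Qed.

Lemma MVT_I a b f f' x y : a <= b -> derive_on a b f f' -> a <= x -> x <= y -> y <= b ->
  exists c, x <= c <= y /\ f y - f x = f' c * (y - x).
Proof.
  intros Hab H Hax Hxy Hyb.
  pose proof (ceps_contpt a b f Hab (deriv_ceps a b f f' H)) as Hc.
  destruct (MVT_gen (fun t => f (clamp a b t)) x y f') as [c [Hc1 Hc2]].
  - intros t Ht. rewrite Rmin_left in Ht by lra. rewrite Rmax_right in Ht by lra.
    apply deriv_clamp; auto; lra.
  - intros t _. apply Hc.
  - rewrite Rmin_left in Hc1 by lra. rewrite Rmax_right in Hc1 by lra.
    exists c; split; auto.
    rewrite (clamp_id a b x), (clamp_id a b y) in Hc2 by (unfold Icc; lra). auto.
Qed.

Lemma fin_choice (n : nat) (P : nat -> R -> Prop) :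
  (forall i, (i < n)%nat -> exists y, P i y) -> exists f : nat -> R, forall i, (i < n)%nat -> P i (f i).
Proof.
  induction n as [|n IH]; intros H.
  - exists (fun _ => 0). intros; lia.
  - destruct IH as [f Hf]. { intros; apply H; lia. }
    destruct (H n ltac:(lia)) as [y Hy].
    exists (fun i => if Nat.eq_dec i n then y else f i).
    intros i Hi. destruct (Nat.eq_dec i n) as [->|Hne]; auto. apply Hf; lia.
Qed.

Section Chain.
Variables (a b : R) (r : nat) (D : nat -> R -> R).
Hypothesis Hab : a <= b.
Hypothesis Hder : forall k, (k < r)%nat -> derive_on a b (D k) (D (S k)).

Lemma mono_x (n : nat) (x : nat -> R) : (forall i, (i < n)%nat -> x i <= x (S i)) ->
  forall i j, (i <= j <= n)%nat -> x i <= x j.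
Proof.
  intros H i j Hij. induction j as [|j IH].
  - replace i with 0%nat by lia. lra.
  - destruct (Nat.eq_dec i (S j)) as [->|Hne]. lra.
    apply Rle_trans with (x j). apply IH; lia. apply H; lia.
Qed.

Lemma step (n j : nat) (x : nat -> R) (s mu c d : R) :
  (j < r)%nat -> 0 < mu -> 0 < d ->
  (forall i, (i <= S n)%nat -> a <= x i <= b) ->
  (forall i, (i < S n)%nat -> x i <= x (S i)) ->
  x (S n) - x O <= d ->
  (forall i, (i <= S n)%nat -> mu <= s * (-1)^i * (D j (x i) - c)) ->
  exists y : nat -> R, (forall i, (i <= n)%nat -> a <= y i <= b) /\
    (forall i, (i < n)%nat -> y i <= y (S i)) /\ y n - y O <= d /\
    (forall i, (i <= n)%nat -> 2 * mu / d <= (- s) * (-1)^i * (D (S j) (y i) - 0)).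
Proof.
  intros Hj Hmu Hd Hx Hmono Hlen Halt.
  pose proof (mono_x (S n) x Hmono) as Hm.
  destruct (fin_choice (S n) (fun i y => x i <= y <= x (S i) /\
       D j (x (S i)) - D j (x i) = D (S j) y * (x (S i) - x i))) as [y Hy].
  { intros i Hi. apply (MVT_I a b (D j) (D (S j)) (x i) (x (S i)) Hab (Hder j Hj)).
    - apply (Hx i); lia.
    - apply Hmono; lia.
    - apply (Hx (S i)); lia. }
  exists y. split; [|split; [|split]].
  - intros i Hi. destruct (Hy i ltac:(lia)) as [[H1 H2] _].
    pose proof (Hx i ltac:(lia)). pose proof (Hx (S i) ltac:(lia)). lra.
  - intros i Hi. destruct (Hy i ltac:(lia)) as [[H1 H2] _].
    destruct (Hy (S i) ltac:(lia)) as [[H3 H4] _]. lra.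
  - destruct (Hy n ltac:(lia)) as [[H1 H2] _].
    destruct (Hy 0%nat ltac:(lia)) as [[H3 H4] _]. lra.
  - intros i Hi. destruct (Hy i ltac:(lia)) as [[H1 H2] HD].
    pose proof (Halt i ltac:(lia)) as A1. pose proof (Halt (S i) ltac:(lia)) as A2.
    simpl in A2.
    set (sg := s * (-1)^i) in *.
    set (u := D j (x i)) in *. set (v := D j (x (S i))) in *.
    set (dd := D (S j) (y i)) in *.
    assert (A2' : mu <= - sg * (v - c)) by (unfold sg; replace (s * (-1 * (-1)^i) * (v - c)) with (- (s * (-1)^i) * (v - c)) in A2 by ring; exact A2).
    set (h := x (S i) - x i) in *.
    assert (Hh0 : 0 <= h) by (unfold h; pose proof (Hmono i ltac:(lia)); lra).
    assert (Hhd : h <= d).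
    { unfold h. pose proof (Hm 0%nat i ltac:(lia)). pose proof (Hm (S i) (S n) ltac:(lia)). lra. }
    assert (E : - sg * (v - u) = sg * (u - c) + (- sg * (v - c))) by ring.
    assert (W : 2 * mu <= (- sg * dd) * h).
    { replace (- sg * dd * h) with (- sg * (dd * h)) by ring. rewrite <- HD. lra. }
    replace (- s * (-1) ^ i * (dd - 0)) with (- sg * dd) by (unfold sg; ring).
    assert (Hh : 0 < h).
    { destruct Hh0 as [Hp|Hz]; auto. rewrite <- Hz in W. lra. }
    assert (Wp : 0 <= - sg * dd) by nra.
    apply Rmult_le_reg_r with d; auto.
    replace (2 * mu / d * d) with (2 * mu) by (field; lra). nra.
Qed.

Lemma chainMVT (k : nat) : forall j (x : nat -> R) (s mu c d : R),
  (j + S k = r)%nat -> 0 < mu -> 0 < d -> (s = 1 \/ s = -1) ->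
  (forall i, (i <= S k)%nat -> a <= x i <= b) ->
  (forall i, (i < S k)%nat -> x i <= x (S i)) ->
  x (S k) - x O <= d ->
  (forall i, (i <= S k)%nat -> mu <= s * (-1)^i * (D j (x i) - c)) ->
  exists xi, a <= xi <= b /\ mu * 2 ^ (S k) / d ^ (S k) <= Rabs (D r xi).
Proof.
  induction k as [|k IH]; intros j x s mu c d Hjk Hmu Hd Hs Hx Hmono Hlen Halt.
  - destruct (step 0 j x s mu c d ltac:(lia) Hmu Hd Hx Hmono Hlen Halt) as [y [Hy1 [_ [_ Hy4]]]].
    exists (y 0%nat). split. apply Hy1; lia.
    specialize (Hy4 0%nat ltac:(lia)). replace r with (S j) by lia.
    simpl in Hy4. replace (mu * 2 ^ 1 / d ^ 1) with (2 * mu / d) by (simpl; field; lra).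
    set (dd := D (S j) (y 0%nat)) in *.
    pose proof (Rle_abs dd). pose proof (Rle_abs (- dd)). rewrite Rabs_Ropp in *.
    set (t := 2 * mu / d) in *. clearbody t dd. destruct Hs; subst s; lra.
  - destruct (step (S k) j x s mu c d ltac:(lia) Hmu Hd Hx Hmono Hlen Halt) as [y [Hy1 [Hy2 [Hy3 Hy4]]]].
    assert (Hmu' : 0 < 2 * mu / d) by (apply Rdiv_lt_0_compat; lra).
    destruct (IH (S j) y (- s) (2 * mu / d) 0 d ltac:(lia) Hmu' Hd ltac:(destruct Hs; subst; lra)
      Hy1 Hy2 Hy3 Hy4) as [xi [Hxi1 Hxi2]].
    exists xi; split; auto.
    replace (mu * 2 ^ S (S k) / d ^ S (S k)) with (2 * mu / d * 2 ^ S k / d ^ S k); auto.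
    simpl. field; repeat split; try apply pow_nonzero; lra.
Qed.
End Chain.

Lemma ceps_abs a b f : ceps a b f -> ceps a b (fun t => Rabs (f t)).
Proof.
  intros H x Hx e He. destruct (H x Hx e He) as [h [hp Hh]]. exists h; split; auto.
  intros y Hy Hyx. eapply Rle_lt_trans. apply Rabs_triang_inv2. apply Hh; auto.
Qed.

Lemma supnorm_bound a b f : a <= b -> ceps a b f ->
  forall t, Icc a b t -> Rabs (f t) <= supnorm a b f.
Proof.
  intros Hab Hf.
  destruct (continuity_ab_maj (fun t => Rabs (f (clamp a b t))) a b Hab) as [Mx [HM HMx]].
  { intros c _. apply (ceps_contpt a b (fun t => Rabs (f t)) Hab (ceps_abs a b f Hf)). }
  set (E := fun y => exists t, Icc a b t /\ y = Rabs (f t)).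
  assert (Hub : forall y, E y -> y <= Rabs (f Mx)).
  { intros y [t [Ht ->]]. specialize (HM t Ht). simpl in HM.
    rewrite (clamp_id a b t Ht), (clamp_id a b Mx HMx) in HM. auto. }
  intros t Ht. unfold supnorm. fold E.
  destruct (Lub_Rbar_correct E) as [H1 H2].
  assert (Et : E (Rabs (f t))) by (exists t; auto).
  specialize (H1 _ Et). specialize (H2 (Finite (Rabs (f Mx)))).
  assert (H2' : Rbar_le (Lub_Rbar E) (Rabs (f Mx))) by (apply H2; intros y Hy; apply Hub; auto).
  destruct (Lub_Rbar E) as [l| |]; simpl in *; auto; contradiction.
Qed.

Lemma inf_ex (A : R -> Prop) (p : R) : (exists t, A t) -> (forall t, A t -> p <= t) ->
  exists m, (forall t, A t -> m <= t) /\ (forall m', (forall t, A t -> m' <= t) -> m' <= m).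
Proof.
  intros [t0 Ht0] Hp.
  destruct (completeness (fun y => A (- y))) as [M [HM1 HM2]].
  { exists (- p). intros y Hy. specialize (Hp _ Hy). lra. }
  { exists (- t0). replace (- - t0) with t0 by ring. auto. }
  exists (- M). split.
  - intros t Ht. assert (- t <= M) by (apply HM1; replace (- - t) with t by ring; auto). lra.
  - intros m' Hm'. assert (M <= - m'). { apply HM2. intros y Hy. specialize (Hm' _ Hy). lra. } lra.
Qed.

Lemma glb_le a b (h : R -> R) (A : R -> Prop) m K : ceps a b h ->
  (forall t, A t -> m <= t) -> (forall m', (forall t, A t -> m' <= t) -> m' <= m) ->
  Icc a b m -> (forall t, A t -> Icc a b t) -> (forall t, A t -> h t <= K) -> h m <= K.
Proof.
  intros Hc H1 H2 Hm HA HK. destruct (Rle_dec (h m) K) as [|Hn]; auto. exfalso.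
  destruct (Hc m Hm (h m - K) ltac:(lra)) as [e [he He]].
  assert (m + e <= m); [|lra].
  apply H2. intros t Ht. destruct (Rle_dec (m + e) t) as [|Hlt]; auto. exfalso.
  pose proof (H1 t Ht). pose proof (HK t Ht).
  assert (Rabs (h t - h m) < h m - K). { apply He; auto. unfold Rabs; destruct Rcase_abs; lra. }
  unfold Rabs in *; destruct Rcase_abs; lra.
Qed.

Lemma ceps_opp a b h : ceps a b h -> ceps a b (fun t => - h t).
Proof.
  intros H x Hx e He. destruct (H x Hx e He) as [k [kp Hk]]. exists k; split; auto.
  intros y Hy Hyx. replace (- h y - - h x) with (- (h y - h x)) by ring. rewrite Rabs_Ropp; auto.
Qed.

Lemma pd_nil : pairwise_disjoint nil.
Proof. intros i j Hi. simpl in Hi. lia. Qed.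

Lemma pd_cons (K : R -> Prop) L : pairwise_disjoint L ->
  (forall J, In J L -> forall t, K t -> J t -> False) -> pairwise_disjoint (K :: L).
Proof.
  intros H HK i j Hi Hj Hij t [H1 H2]. simpl in Hi, Hj.
  destruct i as [|i]; destruct j as [|j]; simpl in H1, H2.
  - lia.
  - apply (HK (nth j L (fun _ => False))) with t; auto. apply nth_In; lia.
  - apply (HK (nth i L (fun _ => False))) with t; auto. apply nth_In; lia.
  - apply (H i j ltac:(lia) ltac:(lia) ltac:(lia) t); auto.
Qed.

Lemma pd_cons_inv (K : R -> Prop) L : pairwise_disjoint (K :: L) ->
  pairwise_disjoint L /\ (forall J, In J L -> forall t, K t -> J t -> False).
Proof.
  intros H. split.
  - intros i j Hi Hj Hij t. apply (H (S i) (S j)); simpl; lia.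
  - intros J HJ t HK HJt. destruct (In_nth L J (fun _ => False) HJ) as [j [Hj Hjeq]].
    apply (H 0%nat (S j) ltac:(simpl; lia) ltac:(simpl; lia) ltac:(lia) t). simpl. rewrite Hjeq. auto.
Qed.

Lemma pd_app L1 L2 : pairwise_disjoint L1 -> pairwise_disjoint L2 ->
  (forall J1 J2, In J1 L1 -> In J2 L2 -> forall t, J1 t -> J2 t -> False) ->
  pairwise_disjoint (L1 ++ L2).
Proof.
  induction L1 as [|K L1 IH]; intros H1 H2 H12; simpl; auto.
  destruct (pd_cons_inv K L1 H1) as [H1a H1b].
  apply pd_cons.
  - apply IH; auto. intros J1 J2 HJ1 HJ2. apply H12; simpl; auto.
  - intros J HJ t HKt HJt. apply in_app_or in HJ. destruct HJ as [HJ|HJ].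
    + apply (H1b J HJ t); auto.
    + apply (H12 K J) with t; simpl; auto.
Qed.

Lemma union_cons K L t : union_of (K :: L) t <-> K t \/ union_of L t.
Proof.
  unfold union_of. split.
  - intros [J [[<-|HJ] Ht]]; [left|right]; auto. exists J; auto.
  - intros [H|[J [HJ Ht]]]. exists K; simpl; auto. exists J; simpl; auto.
Qed.

Lemma union_app L1 L2 t : union_of (L1 ++ L2) t <-> union_of L1 t \/ union_of L2 t.
Proof.
  unfold union_of. split.
  - intros [J [HJ Ht]]. apply in_app_or in HJ. destruct HJ; [left|right]; exists J; auto.
  - intros [[J [HJ Ht]]|[J [HJ Ht]]]; exists J; split; auto; apply in_or_app; auto.
Qed.

Definition Rg (b p q t : R) : Prop := p <= t /\ t < q /\ t <= b.

Definition chain (b : R) (g : R -> R) (lam c p q : R) (m : nat) (x : nat -> R) (s : R) : Prop :=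
  (s = 1 \/ s = -1) /\ (forall i, (i < m)%nat -> Rg b p q (x i)) /\
  (forall i, (S i < m)%nat -> x i <= x (S i)) /\
  (forall i, (i < m)%nat -> lam / 2 <= s * (-1)^i * (g (x i) - c)).

Section Cover.
Variables (a b lam : R) (g : R -> R).
Hypothesis Hlam : 0 < lam.
Hypothesis Hg : ceps a b g.

Lemma chain_mono c p p' q m x s : p <= p' -> chain b g lam c p' q m x s -> chain b g lam c p q m x s.
Proof.
  intros Hp [H1 [H2 [H3 H4]]]. split; auto. split; auto.
  intros i Hi. destruct (H2 i Hi) as [? [? ?]]. split; [lra|auto].
Qed.

Lemma chain_prepend c p q t1 u w m x s :
  Rg b p q u -> Rg b p q w -> u <= t1 -> w <= t1 ->
  lam / 2 <= c - g u -> lam / 2 <= g w - c ->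
  chain b g lam c t1 q m x s -> exists x' s', chain b g lam c p q (S m) x' s'.
Proof.
  intros Hu Hw Hut Hwt Hgu Hgw [Hs [Hr [Hm Ha]]].
  set (z := if Req_EM_T s 1 then u else w).
  exists (fun i => match i with O => z | S i' => x i' end), (- s).
  split; [destruct Hs; subst; lra|]. split; [|split].
  - intros i Hi. destruct i as [|i].
    + unfold z; destruct Req_EM_T; auto.
    + destruct (Hr i ltac:(lia)) as [? [? ?]]. destruct Hu as [? [? ?]]. simpl. unfold Rg; repeat split; lra.
  - intros i Hi. destruct i as [|i].
    + destruct (Hr 0%nat ltac:(lia)) as [? [? ?]]. simpl. unfold z; destruct Req_EM_T; lra.
    + apply Hm; lia.
  - intros i Hi. destruct i as [|i].
    + simpl. unfold z; destruct Req_EM_T as [ -> | Hne]. lra.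
      destruct Hs as [ | -> ]; [contradiction|]. lra.
    + specialize (Ha i ltac:(lia)). simpl.
      replace (- s * (-1 * (-1) ^ i) * (g (x i) - c)) with (s * (-1) ^ i * (g (x i) - c)) by ring. auto.
Qed.

Definition cp := 3 * lam / 2.
Definition cm := - (3 * lam / 2).

Definition cover_prop (p q : R) (N : nat) (L : list (R -> Prop)) : Prop :=
  (length L <= N)%nat /\ (forall J, In J L -> is_interval J) /\
  (forall J, In J L -> forall t, J t -> Rg b p q t /\ Rabs (g t) < 2 * lam) /\
  pairwise_disjoint L /\
  (forall t, Rg b p q t -> Rabs (g t) < lam -> union_of L t).

Lemma cover (n : nat) : forall n1 n2 p q, (n1 + n2 <= n)%nat -> a <= p ->
  (forall m x s, chain b g lam cp p q m x s -> (m <= n1)%nat) ->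
  (forall m x s, chain b g lam cm p q m x s -> (m <= n2)%nat) ->
  exists L, cover_prop p q (S n) L.
Proof.
  induction n as [|n IH]; intros n1 n2 p q Hn Hap Hc1 Hc2.
  - destruct (classic (exists t, Rg b p q t /\ Rabs (g t) < lam)) as [[t0 [Ht0 Hgt0]]|Hno].
    + exfalso.
      assert (chain b g lam cp p q 1 (fun _ => t0) (-1)).
      { split; [lra|]. split; [intros; auto|]. split; [intros; lia|].
        intros i Hi. replace i with 0%nat by lia. simpl. unfold cp.
        unfold Rabs in Hgt0; destruct Rcase_abs; lra. }
      specialize (Hc1 _ _ _ H). lia.
    + exists nil. split; [simpl; lia|]. split; [simpl; tauto|]. split; [simpl; tauto|].
      split; [apply pd_nil|]. intros t Ht Hgt. exfalso. apply Hno; eauto.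
  - destruct (classic (exists t, Rg b p q t /\ Rabs (g t) < lam)) as [[t0 [Ht0 Hgt0]]|Hno].
    2:{ exists nil. split; [simpl; lia|]. split; [simpl; tauto|]. split; [simpl; tauto|].
      split; [apply pd_nil|]. intros t Ht Hgt. exfalso. apply Hno; eauto. }
    assert (Hn1 : (1 <= n1)%nat).
    { assert (chain b g lam cp p q 1 (fun _ => t0) (-1)).
      { split; [lra|]. split; [intros; auto|]. split; [intros; lia|].
        intros i Hi. replace i with 0%nat by lia. simpl. unfold cp.
        unfold Rabs in Hgt0; destruct Rcase_abs; lra. }
      apply (Hc1 _ _ _ H). }
    assert (Hn2 : (1 <= n2)%nat).
    { assert (chain b g lam cm p q 1 (fun _ => t0) 1).
      { split; [lra|]. split; [intros; auto|]. split; [intros; lia|].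
        intros i Hi. replace i with 0%nat by lia. simpl. unfold cm.
        unfold Rabs in Hgt0; destruct Rcase_abs; lra. }
      apply (Hc2 _ _ _ H). }
    set (A := fun t => Rg b p q t /\ Rabs (g t) < lam).
    destruct (inf_ex A p) as [ss [Hs1 Hs2]].
    { exists t0; split; auto. }
    { intros t [[? _] _]. auto. }
    assert (Hpss : p <= ss) by (apply Hs2; intros t [[? _] _]; auto).
    assert (Hss0 : ss <= t0) by (apply Hs1; split; auto).
    destruct Ht0 as [Ht01 [Ht02 Ht03]].
    assert (Hssi : Icc a b ss) by (unfold Icc; lra).
    assert (Hgss : Rabs (g ss) <= lam).
    { apply (glb_le a b (fun t => Rabs (g t)) A ss lam (ceps_abs a b g Hg) Hs1 Hs2 Hssi).
      - intros t [[? [? ?]] _]. unfold Icc; lra.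
      - intros t [_ ?]. lra. }
    assert (HssR : Rg b p q ss) by (unfold Rg; repeat split; lra).
    destruct (classic (exists t, Rg b p q t /\ ss <= t /\ 2 * lam <= Rabs (g t))) as [[t2 Ht2]|HnoT].
    2:{ exists ((fun t => Rg b ss q t) :: nil). split; [simpl; lia|]. split; [|split; [|split]].
      - intros J [<-|[]]. intros x y z [? [? ?]] [? [? ?]] ?. unfold Rg; repeat split; lra.
      - intros J [<-|[]]. intros t [? [? ?]]. split. unfold Rg; repeat split; lra.
        destruct (Rlt_dec (Rabs (g t)) (2 * lam)) as [|Hge]; auto. exfalso. apply HnoT.
        exists t. split. unfold Rg; repeat split; lra. split; lra.
      - apply pd_cons. apply pd_nil. intros J [].
      - intros t Ht Hgt. apply union_cons. left. destruct Ht as [? [? ?]].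
        assert (ss <= t) by (apply Hs1; split; [unfold Rg; repeat split|]; auto). unfold Rg; repeat split; lra. }
    set (T := fun t => Rg b p q t /\ ss <= t /\ 2 * lam <= Rabs (g t)).
    destruct (inf_ex T ss) as [t1 [Ht1 Ht1']].
    { exists t2; auto. }
    { intros t [_ [? _]]; auto. }
    assert (Hsst1 : ss <= t1) by (apply Ht1'; intros t [_ [? _]]; auto).
    assert (Ht12 : t1 <= t2) by (apply Ht1; auto).
    destruct Ht2 as [[Ht21 [Ht22 Ht23]] [Ht24 Ht25]].
    assert (Ht1i : Icc a b t1) by (unfold Icc; lra).
    assert (Hgt1 : 2 * lam <= Rabs (g t1)).
    { assert (- Rabs (g t1) <= - (2 * lam)); [|lra].
      apply (glb_le a b (fun t => - Rabs (g t)) T t1 (- (2 * lam))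
         (ceps_opp a b _ (ceps_abs a b g Hg)) Ht1 Ht1' Ht1i).
      - intros t [[? [? ?]] _]. unfold Icc; lra.
      - intros t [_ [_ ?]]. lra. }
    assert (Hsslt : ss < t1) by (destruct Hsst1 as [|E]; auto; rewrite E in Hgss; lra).
    assert (Ht1R : Rg b p q t1) by (unfold Rg; repeat split; lra).
    assert (Hrec : exists L', cover_prop t1 q (S n) L').
    { assert (Hsg : 2 * lam <= g t1 \/ g t1 <= - (2 * lam)) by (unfold Rabs in Hgt1; destruct Rcase_abs; [right|left]; lra).
      assert (Hgss' : - lam <= g ss <= lam) by (unfold Rabs in Hgss; destruct Rcase_abs; lra).
      destruct Hsg as [Hsg|Hsg].
      - apply (IH (n1 - 1)%nat n2 t1 q ltac:(lia) ltac:(lra)).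
        + intros m x s Hch.
          destruct (chain_prepend cp p q t1 ss t1 m x s HssR Ht1R ltac:(lra) ltac:(lra)
             ltac:(unfold cp; lra) ltac:(unfold cp; lra) Hch) as [x' [s' Hch']].
          specialize (Hc1 _ _ _ Hch'). lia.
        + intros m x s Hch. apply (Hc2 m x s). apply chain_mono with t1; auto; lra.
      - apply (IH n1 (n2 - 1)%nat t1 q ltac:(lia) ltac:(lra)).
        + intros m x s Hch. apply (Hc1 m x s). apply chain_mono with t1; auto; lra.
        + intros m x s Hch.
          destruct (chain_prepend cm p q t1 t1 ss m x s Ht1R HssR ltac:(lra) ltac:(lra)
             ltac:(unfold cm; lra) ltac:(unfold cm; lra) Hch) as [x' [s' Hch']].
          specialize (Hc2 _ _ _ Hch'). lia. }
    destruct Hrec as [L' [HL1 [HL2 [HL3 [HL4 HL5]]]]].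
    exists ((fun t => ss <= t < t1) :: L'). split; [simpl; lia|]. split; [|split; [|split]].
    + intros J [<-|HJ]; auto. intros x y z ? ? ?. lra.
    + intros J [<-|HJ] t Ht.
      * split. unfold Rg; repeat split; lra.
        destruct (Rlt_dec (Rabs (g t)) (2 * lam)) as [|Hge]; auto. exfalso.
        assert (t1 <= t); [|lra]. apply Ht1. split. unfold Rg; repeat split; lra. split; lra.
      * destruct (HL3 J HJ t Ht) as [[? [? ?]] ?]. split; auto. unfold Rg; repeat split; lra.
    + apply pd_cons; auto. intros J HJ t Hk HJt. destruct (HL3 J HJ t HJt) as [[? _] _]. lra.
    + intros t Ht Hgt. apply union_cons.
      assert (ss <= t) by (apply Hs1; split; auto).
      destruct (Rlt_dec t t1); [left; lra|right]. apply HL5; auto.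
      destruct Ht as [? [? ?]]. unfold Rg; repeat split; lra.
Qed.
End Cover.

Section Win.
Variables (a b lam d : R) (g : R -> R) (r : nat).
Hypothesis Hlam : 0 < lam.
Hypothesis Hg : ceps a b g.
Hypothesis Hd : 0 < d.
Hypothesis Hch : forall p q, a <= p -> q - p <= d -> forall c m x s,
  (c = cp lam \/ c = cm lam) -> chain b g lam c p q m x s -> (m <= r)%nat.

Lemma windows (m : nat) : exists L, (length L <= m * S (2 * r))%nat /\
  (forall J, In J L -> is_interval J) /\
  (forall J, In J L -> forall t, J t -> a <= t < a + INR m * d /\ t <= b /\ Rabs (g t) < 2 * lam) /\
  pairwise_disjoint L /\
  (forall t, a <= t < a + INR m * d -> t <= b -> Rabs (g t) < lam -> union_of L t).
Proof.
  induction m as [|m IH].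
  - exists nil. simpl. split; [lia|]. split; [tauto|]. split; [tauto|]. split; [apply pd_nil|].
    intros t Ht. lra.
  - destruct IH as [L1 [H1 [H2 [H3 [H4 H5]]]]].
    assert (Hm0 : 0 <= INR m) by apply pos_INR.
    rewrite S_INR.
    destruct (cover a b lam g Hlam Hg (2 * r) r r (a + INR m * d) (a + (INR m + 1) * d)
      ltac:(lia) ltac:(nra)) as [L2 [G1 [G2 [G3 [G4 G5]]]]].
    { intros m0 x s Hc. apply (Hch (a + INR m * d) (a + (INR m + 1) * d) ltac:(nra) ltac:(lra) (cp lam) m0 x s); auto. }
    { intros m0 x s Hc. apply (Hch (a + INR m * d) (a + (INR m + 1) * d) ltac:(nra) ltac:(lra) (cm lam) m0 x s); auto. }
    exists (L1 ++ L2). split; [|split; [|split; [|split]]].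
    + rewrite app_length. simpl. lia.
    + intros J HJ. apply in_app_or in HJ. destruct HJ; auto.
    + intros J HJ t Ht. apply in_app_or in HJ. destruct HJ as [HJ|HJ].
      * destruct (H3 J HJ t Ht) as [? [? ?]]. repeat split; auto; lra.
      * destruct (G3 J HJ t Ht) as [[? [? ?]] ?]. repeat split; auto; nra.
    + apply pd_app; auto. intros J1 J2 HJ1 HJ2 t Ht1 Ht2.
      destruct (H3 J1 HJ1 t Ht1) as [? _]. destruct (G3 J2 HJ2 t Ht2) as [[? _] _]. lra.
    + intros t Ht Htb Hgt. apply union_app.
      destruct (Rlt_dec t (a + INR m * d)); [left; apply H5; auto; lra|right].
      apply G5; auto. unfold Rg; repeat split; lra.
Qed.
End Win.

Lemma chain_bound a b r g D lam d :
  a <= b -> (1 <= r)%nat -> Cr_derivs a b r g D -> 0 < lam -> 0 < d ->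
  (forall t, Icc a b t -> Rabs (D r t) <= supnorm a b (D r)) ->
  supnorm a b (D r) * d ^ r < lam / 2 * 2 ^ r ->
  forall p q, a <= p -> q - p <= d -> forall c m x s,
  (c = cp lam \/ c = cm lam) -> chain b g lam c p q m x s -> (m <= r)%nat.
Proof.
  intros Hab Hr [HD0 [Hder Hcont]] Hlam Hd HC Hsmall p q Hap Hpq c m x s _ [Hs [HR [Hm Ha]]].
  destruct (le_lt_dec m r) as [|Hmr]; auto. exfalso.
  destruct r as [|k]; [lia|].
  destruct (chainMVT a b (S k) D Hab Hder k 0 x s (lam / 2) c d ltac:(lia) ltac:(lra) Hd Hs)
    as [xi [Hxi1 Hxi2]].
  - intros i Hi. destruct (HR i ltac:(lia)) as [? [? ?]]. lra.
  - intros i Hi. apply Hm. lia.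
  - destruct (HR (S k) ltac:(lia)) as [? [? ?]]. destruct (HR 0%nat ltac:(lia)) as [? [? ?]]. lra.
  - intros i Hi. rewrite HD0. apply Ha. lia.
  - specialize (HC xi Hxi1).
    assert (Hp : 0 < d ^ S k) by (apply pow_lt; lra).
    assert (lam / 2 * 2 ^ S k <= supnorm a b (D (S k)) * d ^ S k); [|lra].
    apply Rmult_le_reg_r with (/ d ^ S k). apply Rinv_0_lt_compat; auto.
    replace (supnorm a b (D (S k)) * d ^ S k * / d ^ S k) with (supnorm a b (D (S k))) by (field; lra).
    unfold Rdiv in Hxi2. lra.
Qed.

Theorem corollary2p2 (a b : R) (r : nat) (g : R -> R) (D : nat -> R -> R) :
  a < b -> (1 <= r)%nat ->
  Cr_derivs a b r g D ->
  forall lambda : R, 0 < lambda -> lambda <= supnorm a b g ->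
  exists L : list (R -> Prop),
    (forall J, In J L -> is_interval J) /\
    pairwise_disjoint L /\
    INR (length L) <=
      30 * INR r * (1 + (b - a) * rootn r (supnorm a b (D r))
                            * Rpower lambda (- / INR r)) /\
    (forall t, Icc a b t -> Rabs (g t) < lambda -> union_of L t) /\
    (forall t, union_of L t -> Icc a b t /\ Rabs (g t) < 8 * lambda).
Proof.
  intros Hab Hr HCr lam Hlam _.
  pose proof HCr as [HD0 [Hder Hcont]].
  assert (Hg : ceps a b g).
  { pose proof (deriv_ceps a b (D 0%nat) (D 1%nat) (Hder 0%nat ltac:(lia))) as H.
    intros x Hx e He. destruct (H x Hx e He) as [h [hp Hh]]. exists h; split; auto.
    intros y Hy Hyx. rewrite <- !HD0. auto. }
  assert (HC : forall t, Icc a b t -> Rabs (D r t) <= supnorm a b (D r)).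
  { apply supnorm_bound. lra. apply cont_ceps; auto. }
  set (C := supnorm a b (D r)) in *.
  assert (HC0 : 0 <= C) by (eapply Rle_trans; [apply Rabs_pos|apply (HC a)]; unfold Icc; lra).
  assert (HR1 : 1 <= INR r) by (apply (le_INR 1); lia).
  assert (H2r : 2 <= 2 ^ r).
  { destruct r as [|k]; [lia|]. simpl. assert (1 <= 2 ^ k) by (apply pow_R1_Rle; lra). lra. }
  assert (Fin : forall d m, 0 < d -> C * d ^ r < lam / 2 * 2 ^ r -> b - a < INR m * d ->
     exists L : list (R -> Prop), (forall J, In J L -> is_interval J) /\ pairwise_disjoint L /\
       (length L <= m * S (2 * r))%nat /\
       (forall t, Icc a b t -> Rabs (g t) < lam -> union_of L t) /\
       (forall t, union_of L t -> Icc a b t /\ Rabs (g t) < 8 * lam)).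
  { intros d m Hd Hsm Hm.
    destruct (windows a b lam d g r Hlam Hg Hd
       (chain_bound a b r g D lam d ltac:(lra) Hr HCr Hlam Hd HC Hsm) m) as [L [H1 [H2 [H3 [H4 H5]]]]].
    exists L. split; auto. split; auto. split; auto. split.
    - intros t [Ht1 Ht2] Hgt. apply H5; auto. lra.
    - intros t [J [HJ Ht]]. destruct (H3 J HJ t Ht) as [? [? ?]]. split. unfold Icc; lra. lra. }
  destruct (Rle_dec C 0) as [HCle|HCgt].
  - destruct (Fin (b - a + 1) 1%nat ltac:(lra)) as [L [H1 [H2 [H3 [H4 H5]]]]].
    { assert (0 < (b - a + 1) ^ r) by (apply pow_lt; lra).
      assert (HC00 : C = 0) by lra. rewrite HC00, Rmult_0_l. apply Rmult_lt_0_compat; lra. }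
    { simpl. lra. }
    exists L. split; auto. split; auto. split; [|split; auto].
    unfold rootn. destruct (Rle_dec C 0); [|contradiction].
    apply le_INR in H3. rewrite mult_INR in H3.
    assert (E2 : INR (S (2 * r)) = 2 * INR r + 1) by (rewrite S_INR, mult_INR; simpl; ring).
    rewrite E2 in H3. simpl in H3.
    rewrite Rmult_0_r, Rmult_0_l, Rplus_0_r. lra.
  - assert (HCp : 0 < C) by lra.
    assert (Hr0 : INR r <> 0) by lra.
    assert (Rp : forall x, 0 < x -> Rpower x (/ INR r) ^ r = x).
    { intros x Hx. rewrite <- Rpower_pow by (unfold Rpower; apply exp_pos).
      rewrite Rpower_mult, Rinv_l by auto. apply Rpower_1; auto. }
    assert (Rpos : forall x y, 0 < Rpower x y) by (intros; unfold Rpower; apply exp_pos).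
    set (X := Rpower lam (/ INR r)). set (Y := Rpower 2 (/ INR r)). set (Z := Rpower C (/ INR r)).
    assert (HX : 0 < X) by apply Rpos. assert (HY : 0 < Y) by apply Rpos. assert (HZ : 0 < Z) by apply Rpos.
    assert (HXr : X ^ r = lam) by (apply Rp; auto).
    assert (HYr : Y ^ r = 2) by (apply Rp; lra).
    assert (HZr : Z ^ r = C) by (apply Rp; auto).
    set (d := X / (Y * Z)).
    assert (Hd : 0 < d) by (unfold d; apply Rdiv_lt_0_compat; nra).
    assert (Hdr : d ^ r * 2 * C = lam).
    { rewrite <- HXr, <- HYr, <- HZr. rewrite <- !Rpow_mult_distr. f_equal. unfold d. field. lra. }
    assert (Hsm : C * d ^ r < lam / 2 * 2 ^ r).
    { set (dr := d ^ r) in *. clearbody dr. set (tr := 2 ^ r) in *. clearbody tr. nra. }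
    set (u := up ((b - a) / d)).
    destruct (archimed ((b - a) / d)) as [Hu1 Hu2]. fold u in Hu1, Hu2.
    assert (Hba : 0 < (b - a) / d) by (apply Rdiv_lt_0_compat; lra).
    assert (Hu0 : (0 < u)%Z) by (apply lt_0_IZR; lra).
    set (m := Z.to_nat u).
    assert (Hmu : INR m = IZR u) by (unfold m; rewrite INR_IZR_INZ, Z2Nat.id; auto; lia).
    assert (Hm : b - a < INR m * d).
    { rewrite Hmu. apply Rmult_lt_reg_r with (/ d). apply Rinv_0_lt_compat; auto.
      replace (IZR u * d * / d) with (IZR u) by (field; lra). exact Hu1. }
    destruct (Fin d m Hd Hsm Hm) as [L [H1 [H2 [H3 [H4 H5]]]]].
    exists L. split; auto. split; auto. split; [|split; auto].
    apply le_INR in H3. rewrite mult_INR in H3.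
    assert (E2 : INR (S (2 * r)) = 2 * INR r + 1) by (rewrite S_INR, mult_INR; simpl; ring).
    rewrite E2 in H3.
    unfold rootn. destruct (Rle_dec C 0); [lra|]. fold Z.
    rewrite Rpower_Ropp. fold X.
    set (P := (b - a) * Z * / X).
    assert (HP : 0 <= P) by (unfold P; apply Rmult_le_pos; [nra|left; apply Rinv_0_lt_compat; auto]).
    assert (Hbd : (b - a) / d = Y * P) by (unfold P, d; field; repeat split; lra).
    assert (HY2 : Y <= 2).
    { unfold Y. replace 2 with (Rpower 2 1) at 2 by (apply Rpower_1; lra).
      apply Rle_Rpower. lra. apply Rle_trans with (/ 1). apply Rinv_le_contravar; lra. rewrite Rinv_1; lra. }
    assert (Hm2 : INR m <= Y * P + 1) by lra.
    assert (Hm0 : 0 <= INR m) by apply pos_INR.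
    set (R0 := INR r) in *. set (M := INR m) in *. set (l := INR (length L)) in *.
    clearbody P R0 M l.
    assert (Y * P <= 2 * P) by nra.
    assert (M * (2 * R0 + 1) <= (2 * P + 1) * (2 * R0 + 1)) by (apply Rmult_le_compat_r; lra).
    nra.
Qed.
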